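(* Let $\{e_j\}_{j=1}^d$ be an orthonormal basis of $\mathbb C^d$. There is a map $F:\mathbb R^{3d-2}\to\mathbb C^d$ (depending on the basis) such that the following holds. Let $m>0$, let $x\in\mathbb C^d\setminus\{0\}$ and $\epsilon\in\mathbb R^{3d-2}$ satisfy $|\langle x,e_j\rangle|^2-|\epsilon_j|\ge m\|x\|_\infty^2$ for all $j\in\{1,\dots,d\}$, and let $C=\frac{(1+\sqrt2)\|\epsilon\|_\infty+\|x\|_\infty^2}{m\|x\|_\infty^2}$. Then $y=(y_1,\dots,y_d)=F(\widetilde{\mathcal A}_{\{e_j\}}(x,\epsilon))$ satisfies, for all $k\in\{1,\dots,d\}$, $$\left|y_k-\frac{\overline{x_1}}{|x_1|}x_k\right|\le\left(\frac{2+\sqrt2}{m}\,\frac{1-C^{k-1}}{1-C}+\frac{C^{k-1}}{2\sqrt m}\right)\frac{\|\epsilon\|_\infty}{\|x\|_\infty}.$$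
   Context: $\mathbb C^d$ has the standard inner product $\langle u,v\rangle=\sum u_k\overline{v_k}$. Here $x_k=\langle x,e_k\rangle$ and $\|x\|_\infty=\max_k|x_k|$ (coordinates with respect to the basis), $\|\epsilon\|_\infty=\max_j|\epsilon_j|$. Measurement vectors: $f_j=e_j$ ($1\le j\le d$), $f_j=e_{j-d}-e_{j-d+1}$ ($d+1\le j\le 2d-1$), $f_j=e_{j-(2d-1)}-ie_{j-(2d-1)+1}$ ($2d\le j\le 3d-2$); noisy measurements $\widetilde{\mathcal A}_{\{e_j\}}(x,\epsilon)=(|\langle x,f_j\rangle|^2+\epsilon_j)_{j=1}^{3d-2}$. The expression $\frac{1-C^{k-1}}{1-C}$ denotes $\sum_{i=0}^{k-2}C^i$ (which equals the quotient when $C\ne1$). *)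

(* Defs.v *)
From HB Require Import structures.
From mathcomp Require Import all_boot all_order all_algebra.
From mathcomp Require Import complex.
Set Implicit Arguments. Unset Strict Implicit. Unset Printing Implicit Defensive.
Import Order.TTheory GRing.Theory Num.Theory.
Local Open Scope ring_scope.

Section Defs.
Variable R : rcfType.

Definition cabs (z : R[i]) : R := Num.sqrt (complex.Re z ^+ 2 + complex.Im z ^+ 2).

Definition cinner (d : nat) (u v : 'I_d -> R[i]) : R[i] :=
  \sum_(k < d) u k * (v k)^*%C.

Definition is_orthonormal_basis (d : nat) (e : 'I_d -> 'I_d -> R[i]) : Prop :=
  forall i j : 'I_d, cinner (e i) (e j) = (i == j)%:R.

Definition bcoord (d : nat) (e : 'I_d -> 'I_d -> R[i]) (x : 'I_d -> R[i]) (k : 'I_d) : R[i] :=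
  cinner x (e k).

Definition coord_supnorm (d : nat) (e : 'I_d -> 'I_d -> R[i]) (x : 'I_d -> R[i]) : R :=
  \big[Num.max/0]_(k < d) cabs (bcoord e x k).

Definition supnorm (n : nat) (v : 'I_n -> R) : R := \big[Num.max/0]_(j < n) `|v j|.

(* basis vector with a natural-number (0-based) index; zero if out of range *)
Definition enat (d : nat) (e : 'I_d -> 'I_d -> R[i]) (k : nat) : 'I_d -> R[i] :=
  match insub k with Some i => e i | None => fun _ => 0 end.

(* measurement vectors, 0-based index j < 3d-2:
   j < d          : e_j
   d <= j < 2d-1  : e_(j-d) - e_(j-d+1)
   2d-1 <= j      : e_(j-(2d-1)) - i e_(j-(2d-1)+1)   *)
Definition fvec (d : nat) (e : 'I_d -> 'I_d -> R[i]) (j : nat) : 'I_d -> R[i] :=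
  if (j < d)%N then enat e j
  else if (j < 2 * d - 1)%N then
    (fun t => enat e (j - d)%N t - enat e (j - d)%N.+1 t)
  else
    (fun t => enat e (j - (2 * d - 1))%N t - 'i%C * enat e (j - (2 * d - 1))%N.+1 t).

Definition noisy_meas (d : nat) (e : 'I_d -> 'I_d -> R[i]) (x : 'I_d -> R[i])
  (eps : 'I_(3 * d - 2) -> R) : 'I_(3 * d - 2) -> R :=
  fun j => cabs (cinner x (fvec e j)) ^+ 2 + eps j.

(* entry of a real vector by a natural-number index; zero if out of range *)
Definition vnat (n : nat) (v : 'I_n -> R) (k : nat) : R :=
  match insub k with Some i => v i | None => 0 end.

End Defs.

(* Main.v *)
Require Import Defs.
From HB Require Import structures.
From mathcomp Require Import all_boot all_order all_algebra.
From mathcomp Require Import complex.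
From mathcomp Require Import ring lra zify.
Import Order.TTheory GRing.Theory Num.Theory.
Set Implicit Arguments. Unset Strict Implicit.
Local Open Scope ring_scope.
Section S.
Variable R : rcfType.
Implicit Types z w : R[i].
Lemma cabsC z : ((cabs z)%:C)%C = `|z|.
Proof. by rewrite normc_def. Qed.
Lemma cabs_ge0 z : 0 <= cabs z.
Proof. exact: sqrtr_ge0. Qed.
Lemma cabsM z w : cabs (z * w) = cabs z * cabs w.
Proof. apply: complexI; rewrite cabsC normrM -!cabsC. by rewrite /=; simpc. Qed.
Lemma cabsD z w : cabs (z + w) <= cabs z + cabs w.
Proof. rewrite -lecR cabsC. have -> : ((cabs z + cabs w)%:C)%C = (cabs z)%:C%C + (cabs w)%:C%C by rewrite /=; simpc. by rewrite !cabsC ler_normD. Qed.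
Lemma realCV (c : R) : (((c%:C)^-1) = (c^-1)%:C)%C.
Proof. apply/eqP; rewrite eq_complex /= expr0n addr0 mul0r oppr0 eqxx andbT.
 case: (eqVneq c 0) => [->|nz]; first by rewrite invr0 mul0r.
 by apply/eqP; rewrite expr2 invfM mulrA mulfV // mul1r. Qed.
Lemma cabsV z : cabs (z^-1) = (cabs z)^-1.
Proof. apply: complexI; rewrite cabsC normfV -cabsC. exact: realCV. Qed.
Lemma cabsN z : cabs (- z) = cabs z.
Proof. apply: complexI; by rewrite !cabsC normrN. Qed.
Lemma cabsJ z : cabs (z^*)%C = cabs z.
Proof. by case: z => a b; rewrite /cabs /= sqrrN. Qed.
Lemma cabsR (r : R) : cabs (r%:C)%C = `|r|.
Proof. by rewrite /cabs /= expr0n addr0 sqrtr_sqr. Qed.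
Lemma cabs_sq z : cabs z ^+ 2 = complex.Re z ^+ 2 + complex.Im z ^+ 2.
Proof. by rewrite sqr_sqrtr // addr_ge0 // sqr_ge0. Qed.
Lemma cabs_eq0 z : cabs z = 0 -> z = 0.
Proof. move=> h; apply/eqP; rewrite -normr_eq0 -cabsC h. by []. Qed.
Lemma cabs_subsq (p q : R[i]) :
  cabs (p - q) ^+ 2 = cabs p ^+ 2 + cabs q ^+ 2 - 2 * complex.Re (p * q^*)%C.
Proof. case: p q => a b [c d]; rewrite !cabs_sq /=. ring. Qed.
Lemma cabs_addisq (p q : R[i]) :
  cabs (p + 'i%C * q) ^+ 2 = cabs p ^+ 2 + cabs q ^+ 2 + 2 * complex.Im (p * q^*)%C.
Proof. case: p q => a b [c d]; rewrite !cabs_sq /=. ring. Qed.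
End S.
Section S.
Variable R : rcfType.
Lemma mulJ (z : R[i]) : (z * z^* = (cabs z ^+ 2)%:C)%C.
Proof. case: z => a b; apply/eqP; rewrite eq_complex cabs_sq /=. apply/andP; split; apply/eqP; ring. Qed.
Lemma realC_eq0 (c : R) : ((c%:C)%C == 0) = (c == 0).
Proof. by rewrite eq_complex /= eqxx andbT. Qed.
Lemma realCD (c c' : R) : (((c + c')%:C) = c%:C + c'%:C)%C.
Proof. by simpc. Qed.
End S.
Section S.
Variable R : rcfType.
Lemma step (X0 X1 W y u : R[i]) (ek ne nx m : R) :
 0 < m -> 0 < nx -> 0 <= ne -> `|ek| <= ne -> cabs u = 1 ->
 cabs X0 <= nx -> cabs X1 <= nx ->
 m * nx ^+ 2 <= cabs X0 ^+ 2 - `|ek| ->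
 cabs (W - X0 * (X1^*)%C) <= (1 + Num.sqrt 2) * ne ->
 cabs ((W^*)%C * y / ((cabs X0 ^+ 2 + ek)%:C)%C - u * X1)
   <= ((1 + Num.sqrt 2) * ne + nx ^+ 2) / (m * nx ^+ 2) * cabs (y - u * X0)
      + (2 + Num.sqrt 2) / m * (ne / nx).
Proof.
move=> m0 nx0 ne0 ekne u1 a_le a'_le hyp dW.
set a := cabs X0 in a_le hyp *; set a' := cabs X1 in a'_le *.
set s := Num.sqrt 2.
have s0 : 0 <= s by apply: sqrtr_ge0.
have s2 : s ^+ 2 = 2 by rewrite sqr_sqrtr.
have a0 : 0 <= a by apply: cabs_ge0.
have a'0 : 0 <= a' by apply: cabs_ge0.
have q0 : 0 < m * nx ^+ 2 by rewrite mulr_gt0 // exprn_gt0.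
have ek0 : 0 <= `|ek| by [].
have hek : - `|ek| <= ek by rewrite lerNl -normrN ler_norm.  
have apos : 0 < a.
  have : 0 < a ^+ 2 by lra.
  by rewrite lt0r => /andP[]; rewrite expf_eq0 /= lt0r => -> _; rewrite a0.
have Bpos : 0 < a ^+ 2 + ek by lra.
have A0 : ((a ^+ 2)%:C)%C != 0 :> R[i] by rewrite realC_eq0 expf_eq0 /= gt_eqF.
have B0 : ((a ^+ 2 + ek)%:C)%C != 0 :> R[i] by rewrite realC_eq0 gt_eqF.
have hX0 := mulJ X0.
have eqX1 : u * X1 = u * X0 * (X0^*)%C * X1 / ((a ^+ 2)%:C)%C.
  by rewrite -(mulrA u X0) hX0 mulrAC -(mulrA u) mulfV // mulr1.
rewrite eqX1.
set A := ((a ^+ 2)%:C)%C in A0 eqX1 *.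
set B := ((a ^+ 2 + ek)%:C)%C in B0 *.
have BAE : B = A + (ek%:C)%C by rewrite /B /A realCD.
have -> : (W^*)%C * y / B - u * X0 * (X0^*)%C * X1 / A =
   (W^*)%C * (y - u * X0) / B +
   u * X0 * (((W - X0 * (X1^*)%C)^*)%C * A - (X0^*)%C * X1 * (ek%:C)%C) / (B * A).
  rewrite rmorphB rmorphM /= conjcK.
  move: B0; rewrite BAE => B0'. field. apply/andP; split; first by rewrite realC_eq0 gt_eqF.
  by rewrite -rmorphXn -rmorphD realC_eq0 gt_eqF.
set inner := (_ - _ * (ek%:C)%C).
have hI : cabs inner <= (1 + s) * ne * a ^+ 2 + a * a' * ne.
  rewrite /inner; apply: le_trans (cabsD _ _) _; rewrite cabsN !cabsM !cabsJ !cabsR.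
  rewrite -/a -/a' ger0_norm ?exprn_ge0 //.
  apply: lerD; first by apply: ler_wpM2r; rewrite ?exprn_ge0.
  by apply: ler_wpM2l => //; rewrite mulr_ge0.
have hW : cabs W <= (1 + s) * ne + a * a'.
  have -> : W = (W - X0 * (X1^*)%C) + X0 * (X1^*)%C by rewrite subrK.
  apply: le_trans (cabsD _ _) _; rewrite cabsM cabsJ -/a -/a'.
  by rewrite lerD2r.
have E00 : 0 <= cabs (y - u * X0) by apply: cabs_ge0.
set E0 := cabs (y - u * X0) in E00 *.
apply: le_trans (cabsD _ _) _.
rewrite /B /A !cabsM !cabsV !cabsM !cabsR !cabsJ u1 mul1r -/a -/E0.
rewrite (ger0_norm (ltW Bpos)) (ger0_norm (exprn_ge0 _ a0)).
set C := (_ / (m * nx ^+ 2)).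
have hC : C * (m * nx ^+ 2) = (1 + s) * ne + nx ^+ 2 by rewrite divfK // gt_eqF.
have C0 : 0 <= C by apply: divr_ge0; nra.
set K := (2 + s) / m * (ne / nx).
have hK : K * (m * nx ^+ 2) = (2 + s) * ne * nx.
  by rewrite /K; field; rewrite gt_eqF //= gt_eqF.
have K0 : 0 <= K by rewrite /K; apply: mulr_ge0; apply: divr_ge0; lra.
apply: lerD.
  rewrite mulrAC; apply: ler_wpM2r => //; rewrite ler_pdivrMr //.
  have : a * a' <= nx ^+ 2 by rewrite expr2; apply: ler_pM.
  nra.
rewrite ler_pdivrMr ?mulr_gt0 ?exprn_gt0 //.
have h1 : a * cabs inner <= a ^+ 2 * (a * (1 + s) * ne + a' * ne).
  have -> : a ^+ 2 * (a * (1 + s) * ne + a' * ne) = a * ((1 + s) * ne * a ^+ 2 + a * a' * ne) by ring.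
  by apply: ler_wpM2l.
have h2 : a * (1 + s) * ne + a' * ne <= (2 + s) * ne * nx.
  have h4 : a * (1 + s) * ne <= nx * (1 + s) * ne.
    by apply: ler_wpM2r => //; apply: ler_wpM2r => //; lra.
  have h5 : a' * ne <= nx * ne by apply: ler_wpM2r.
  lra.
have h3 : (2 + s) * ne * nx <= K * (a ^+ 2 + ek).
  have : m * nx ^+ 2 <= a ^+ 2 + ek by lra.
  nra.
have -> : K * ((a ^+ 2 + ek) * a ^+ 2) = a ^+ 2 * (K * (a ^+ 2 + ek)) by ring.
apply: (le_trans h1); apply: ler_wpM2l; first by apply: exprn_ge0.
lra.
Qed.
End S.
Section S.
Variable R : rcfType.
Lemma base_real (a e0 ne nx m : R) : 0 < m -> 0 < nx -> 0 <= a -> `|e0| <= ne ->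
  m * nx ^+ 2 <= a ^+ 2 - `|e0| ->
  `|Num.sqrt (a ^+ 2 + e0) - a| <= 1 / (2 * Num.sqrt m) * (ne / nx).
Proof.
move=> m0 nx0 a0 hne hyp.
have r0 : 0 < Num.sqrt m by rewrite sqrtr_gt0.
have r2 : Num.sqrt m ^+ 2 = m by rewrite sqr_sqrtr // ltW.
set r := Num.sqrt m in r0 r2 *.
have hek : - `|e0| <= e0 by rewrite lerNl -normrN ler_norm.
have hek2 : e0 <= `|e0| by rewrite ler_norm.
have B0 : 0 <= a ^+ 2 + e0 by nra.
have s0 : 0 <= Num.sqrt (a ^+ 2 + e0) by apply: sqrtr_ge0.
have s2 : Num.sqrt (a ^+ 2 + e0) ^+ 2 = a ^+ 2 + e0 by rewrite sqr_sqrtr.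
set s := Num.sqrt (a ^+ 2 + e0) in s0 s2 *.
have ha : r * nx <= a by nra.
have hs : r * nx <= s by nra.
set K := 1 / (2 * r) * (ne / nx).
have hK : K * (2 * r * nx) = ne by rewrite /K; field; rewrite !gt_eqF.
have q0 : 0 < 2 * r * nx by rewrite !mulr_gt0.
have sa0 : 0 <= s + a by lra.
have h1 : `|s - a| * (2 * r * nx) <= `|s - a| * (s + a) by apply: ler_wpM2l => //; lra.
have h2 : `|s - a| * (s + a) = `|e0|.
  rewrite -[s + a in LHS]ger0_norm // -normrM; congr `|_|.
  by rewrite -subr_sqr s2; ring.
rewrite -(ler_pM2r q0) hK; lra.
Qed.
Lemma realCX2 (c : R) : (((c ^+ 2)%:C) = (c%:C) ^+ 2)%C.
Proof. by rewrite !expr2; simpc. Qed.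
Lemma realCB (c c' : R) : (((c - c')%:C) = c%:C - c'%:C)%C.
Proof. by simpc. Qed.
Lemma base (X0 : R[i]) (e0 ne nx m : R) : 0 < m -> 0 < nx -> `|e0| <= ne ->
  m * nx ^+ 2 <= cabs X0 ^+ 2 - `|e0| ->
  cabs ((Num.sqrt (cabs X0 ^+ 2 + e0))%:C%C - ((X0^*)%C / ((cabs X0)%:C)%C) * X0)
   <= 1 / (2 * Num.sqrt m) * (ne / nx).
Proof.
move=> m0 nx0 hne hyp.
have a0 : 0 <= cabs X0 by apply: cabs_ge0.
set a := cabs X0 in a0 hyp *.
have apos : 0 < a.
  have : 0 < a ^+ 2 by have := normr_ge0 e0; have := exprn_gt0 2 nx0; nra.
  by rewrite lt0r => /andP[]; rewrite expf_eq0 /= lt0r => -> _; rewrite a0.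
have A0 : ((a%:C)%C != 0 :> R[i]) by rewrite realC_eq0 gt_eqF.
rewrite mulrAC (mulrC (X0^*)%C) mulJ -/a realCX2 expr2 mulfK // -realCB cabsR.
exact: base_real.
Qed.
End S.
Section S.
Variable R : rcfType.

Definition Xn (d : nat) (e : 'I_d -> 'I_d -> R[i]) (x : 'I_d -> R[i]) (k : nat) : R[i] :=
  cinner x (enat e k).

Lemma vnat_lt n (v : 'I_n -> R) j (h : (j < n)%N) : vnat v j = v (Ordinal h).
Proof. by rewrite /vnat insubT. Qed.

Lemma vnat_ge n (v : 'I_n -> R) j : (n <= j)%N -> vnat v j = 0.
Proof. by move=> h; rewrite /vnat insubF // ltnNge h. Qed.

Lemma sup_ge0 n (v : 'I_n -> R) : 0 <= supnorm v.
Proof. exact: bigmax_ge_id. Qed.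

Lemma sup_ge n (v : 'I_n -> R) j : `|vnat v j| <= supnorm v.
Proof.
case: (ltnP j n) => h; last by rewrite vnat_ge // normr0 sup_ge0.
rewrite vnat_lt; exact: (le_bigmax _ (fun j => `|v j|)).
Qed.

Lemma cinner0 d (x : 'I_d -> R[i]) : cinner x (fun _ => 0) = 0.
Proof. by rewrite /cinner big1 // => i _; rewrite conjc0 mulr0. Qed.

Lemma Xn_ord d e x (k : 'I_d) : Xn e x k = bcoord e x k.
Proof. by rewrite /Xn /enat valK. Qed.

Lemma Xn_ge d e x k : (d <= k)%N -> Xn (d:=d) e x k = 0.
Proof. by move=> h; rewrite /Xn /enat insubF ?cinner0 // ltnNge h. Qed.

Lemma Xn_le d e x k : cabs (Xn (d:=d) e x k) <= coord_supnorm e x.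
Proof.
case: (ltnP k d) => h.
  have -> : k = nat_of_ord (Ordinal h) by [].
  rewrite Xn_ord; exact: (le_bigmax _ (fun j => cabs (bcoord e x j))).
rewrite Xn_ge // (_ : cabs 0 = 0); first exact: bigmax_ge_id.
by rewrite /cabs /= expr0n addr0 sqrtr0.
Qed.

Lemma cinnerB d (x f g : 'I_d -> R[i]) :
  cinner x (fun t => f t - g t) = cinner x f - cinner x g.
Proof. rewrite /cinner -sumrB; apply: eq_bigr => t _; by rewrite rmorphB mulrBr. Qed.

Lemma conj_i : ('i^* = - 'i :> R[i])%C.
Proof. by apply/eqP; rewrite eq_complex /= oppr0 !eqxx. Qed.

Lemma cinnerBi d (x f g : 'I_d -> R[i]) :
  cinner x (fun t => f t - 'i%C * g t) = cinner x f + 'i%C * cinner x g.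
Proof.
rewrite /cinner mulr_sumr -big_split; apply: eq_bigr => t _.
rewrite rmorphB rmorphM /=.
have -> : (Complex 0 (-1) : R[i]) = - ('i)%C by apply/eqP; rewrite eq_complex /= oppr0 !eqxx.
ring. Qed.

Lemma fvec1 d (e : 'I_d -> 'I_d -> R[i]) k : (k < d)%N -> fvec e k = enat e k.
Proof. by move=> h; rewrite /fvec h. Qed.

Lemma fvec2 d (e : 'I_d -> 'I_d -> R[i]) k : (k.+1 < d)%N ->
  fvec e (d + k) = fun t => enat e k t - enat e k.+1 t.
Proof.
move=> h; rewrite /fvec.
have -> : (d + k < d)%N = false by lia.
have -> : (d + k < 2 * d - 1)%N = true by lia.
by have -> : (d + k - d = k)%N by lia.
Qed.

Lemma fvec3 d (e : 'I_d -> 'I_d -> R[i]) k : (k.+1 < d)%N ->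
  fvec e (2 * d - 1 + k) = fun t => enat e k t - 'i%C * enat e k.+1 t.
Proof.
move=> h; rewrite /fvec.
have -> : (2 * d - 1 + k < d)%N = false by lia.
have -> : (2 * d - 1 + k < 2 * d - 1)%N = false by lia.
by have -> : (2 * d - 1 + k - (2 * d - 1) = k)%N by lia.
Qed.

Lemma meas d e x (eps : 'I_(3 * d - 2) -> R) j : (j < 3 * d - 2)%N ->
  vnat (noisy_meas e x eps) j = cabs (cinner x (fvec e j)) ^+ 2 + vnat eps j.
Proof. by move=> h; rewrite !(vnat_lt _ h). Qed.

Lemma measB d e x (eps : 'I_(3 * d - 2) -> R) k : (k < d)%N ->
  vnat (noisy_meas e x eps) k = cabs (Xn e x k) ^+ 2 + vnat eps k.
Proof. by move=> h; rewrite meas ?fvec1 //; lia. Qed.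

Lemma measC d e x (eps : 'I_(3 * d - 2) -> R) k : (k.+1 < d)%N ->
  vnat (noisy_meas e x eps) (d + k) =
    cabs (Xn e x k - Xn e x k.+1) ^+ 2 + vnat eps (d + k).
Proof. by move=> h; rewrite meas ?fvec2 ?cinnerB //; lia. Qed.

Lemma measG d e x (eps : 'I_(3 * d - 2) -> R) k : (k.+1 < d)%N ->
  vnat (noisy_meas e x eps) (2 * d - 1 + k) =
    cabs (Xn e x k + 'i%C * Xn e x k.+1) ^+ 2 + vnat eps (2 * d - 1 + k).
Proof. by move=> h; rewrite meas ?fvec3 ?cinnerBi //; lia. Qed.
End S.
Section S.
Variable R : rcfType.

Definition Wn d (b : 'I_(3 * d - 2) -> R) (k : nat) : R[i] :=
  Complex ((vnat b k + vnat b k.+1 - vnat b (d + k)) / 2)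
          ((vnat b (2 * d - 1 + k) - vnat b k - vnat b k.+1) / 2).

Lemma cabs_le_sq (z : R[i]) (T : R) : 0 <= T -> cabs z ^+ 2 <= T ^+ 2 -> cabs z <= T.
Proof. move=> T0 h; have := cabs_ge0 z; nra. Qed.

Lemma absb (r ne : R) : `|r| <= ne -> - ne <= r /\ r <= ne.
Proof. by rewrite ler_norml => /andP[]. Qed.

Lemma Wbound d e x (eps : 'I_(3 * d - 2) -> R) k : (k.+1 < d)%N ->
  cabs (Wn (noisy_meas e x eps) k - Xn e x k * (Xn e x k.+1)^*%C)
    <= (1 + Num.sqrt 2) * supnorm eps.
Proof.
move=> h; rewrite /Wn (@measC _ _ e x eps k h) (@measG _ _ e x eps k h).
rewrite (@measB _ _ e x eps k (ltnW h)) (@measB _ _ e x eps k.+1 h).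
rewrite cabs_subsq cabs_addisq.
have [h1 h1'] := absb (sup_ge eps k).
have [h2 h2'] := absb (sup_ge eps k.+1).
have [h3 h3'] := absb (sup_ge eps (d + k)).
have [h4 h4'] := absb (sup_ge eps (2 * d - 1 + k)).
have ne0 := sup_ge0 eps.
have s0 : 0 <= Num.sqrt 2 :> R by apply: sqrtr_ge0.
have s2 : Num.sqrt 2 ^+ 2 = 2 :> R by rewrite sqr_sqrtr.
move: (Xn e x k * _) => [wr wi] /=.
move: (Num.sqrt 2) s0 s2 => s s0 s2.
move: (supnorm eps) ne0 h1 h1' h2 h2' h3 h3' h4 h4' => ne ne0 h1 h1' h2 h2' h3 h3' h4 h4'.
apply: cabs_le_sq; first by nra.
rewrite cabs_sq /=.
have s34 : 3 / 4 <= s by nra.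
set e1 := vnat eps k in h1 h1' *; set e2 := vnat eps k.+1 in h2 h2' *;
set e3 := vnat eps (d + k) in h3 h3' *;
set e4 := vnat eps (2 * d - 1 + k) in h4 h4' *.
set p := cabs (Xn e x k); set q := cabs (Xn e x k.+1).
have -> : ((p ^+ 2 + e1 + (q ^+ 2 + e2) - (p ^+ 2 + q ^+ 2 - 2 * wr + e3)) / 2 - wr) ^+ 2 +
  ((p ^+ 2 + q ^+ 2 + 2 * wi + e4 - (p ^+ 2 + e1) - (q ^+ 2 + e2)) / 2 - wi) ^+ 2
  = (e1 + e2 - e3) ^+ 2 / 4 + (e4 - e1 - e2) ^+ 2 / 4 by field.
have hr : forall r, - (3 * ne) <= r -> r <= 3 * ne -> r ^+ 2 <= 9 * ne ^+ 2.
  move=> r ha hb; have : 0 <= (3 * ne - r) * (r + 3 * ne) by apply: mulr_ge0; lra.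
  nra.
have g1 := hr (e1 + e2 - e3) ltac:(lra) ltac:(lra).
have g2 := hr (e4 - e1 - e2) ltac:(lra) ltac:(lra).
have g3 : 0 <= (2 * s - 3 / 2) * ne ^+ 2 by apply: mulr_ge0; [lra | apply: sqr_ge0].
have -> : ((1 + s) * ne) ^+ 2 = 9 / 2 * ne ^+ 2 + (2 * s - 3 / 2) * ne ^+ 2 by rewrite exprMn sqrrD expr1n s2; field.
lra.
Qed.
End S.

Fixpoint ys (R : rcfType) d (b : 'I_(3 * d - 2) -> R) (k : nat) : R[i] :=
  if k is k'.+1 then ((Wn b k')^*)%C * ys b k' / ((vnat b k')%:C)%C
  else ((Num.sqrt (vnat b 0))%:C)%C.

Lemma sum_geomS (R : rcfType) (C : R) n :
  \sum_(i < n.+1) C ^+ i = 1 + C * \sum_(i < n) C ^+ i.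
Proof.
rewrite big_ord_recl expr0; congr (_ + _); rewrite mulr_sumr.
by apply: eq_bigr => i _; rewrite exprS.
Qed.

Lemma cabs0 (R : rcfType) : cabs (0 : R[i]) = 0.
Proof. by rewrite /cabs /= expr0n addr0 sqrtr0. Qed.

Unset Implicit Arguments.
Theorem mainTheorem9 (R : rcfType) (d : nat) (hd : (0 < d)%N)
    (e : 'I_d -> 'I_d -> R[i]) :
  is_orthonormal_basis e ->
  exists F : ('I_(3 * d - 2) -> R) -> ('I_d -> R[i]),
    forall (m : R) (x : 'I_d -> R[i]) (eps : 'I_(3 * d - 2) -> R),
      0 < m ->
      x <> (fun _ => 0) ->
      (forall j : 'I_d,
          cabs (bcoord e x j) ^+ 2 - `|vnat eps j| >= m * coord_supnorm e x ^+ 2) ->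
      let nx := coord_supnorm e x in
      let ne := supnorm eps in
      let C := ((1 + Num.sqrt 2) * ne + nx ^+ 2) / (m * nx ^+ 2) in
      let y := F (noisy_meas e x eps) in
      let x1 := bcoord e x (Ordinal hd) in
      forall k : 'I_d,
        cabs (y k - ((x1^*)%C / ((cabs x1)%:C)%C) * bcoord e x k)
        <= ((2 + Num.sqrt 2) / m * (\sum_(i < k) C ^+ i)
            + C ^+ k / (2 * Num.sqrt m)) * (ne / nx).
Proof.
move=> _; exists (fun b (k : 'I_d) => ys b k).
move=> m x eps m0 _ H nx ne C y x1 k.
rewrite /y.
set b := noisy_meas e x eps.
have Hn : forall j, (j < d)%N -> m * nx ^+ 2 <= cabs (Xn e x j) ^+ 2 - `|vnat eps j|.
  by move=> j hj; have := H (Ordinal hj); rewrite -Xn_ord.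
have nx0 : 0 <= nx by apply: bigmax_ge_id.
have ne0 : 0 <= ne by apply: sup_ge0.
have hx1 : x1 = Xn e x 0 by rewrite /x1 -Xn_ord.
rewrite -Xn_ord hx1.
case: (eqVneq nx 0) => [nx_eq0 | nxne].
  have Xz : forall j, Xn e x j = 0.
    move=> j; apply: cabs_eq0; have := Xn_le e x j; have := cabs_ge0 (Xn e x j).
    rewrite -/nx nx_eq0; lra.
  have bz : forall j, (j < d)%N -> vnat b j = 0.
    move=> j hj; rewrite /b measB // Xz cabs0.
    have := Hn j hj; rewrite nx_eq0 Xz cabs0 => h.
    have : `|vnat eps j| = 0 by have := normr_ge0 (vnat eps j); lra.
    by move/eqP; rewrite normr_eq0 => /eqP ->; rewrite expr0n addr0.
  have yz : ys b k = 0.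
    case: k => [[|k'] hk] /=; first by rewrite bz // sqrtr0.
    rewrite bz; last lia.
    by rewrite realCV invr0 (_ : ((0:R)%:C)%C = 0) ?mulr0.
  by rewrite yz !Xz mulr0 subrr cabs0 nx_eq0 invr0 !mulr0.
have nxpos : 0 < nx by rewrite lt_def nxne nx0.
have a0pos : 0 < cabs (Xn e x 0).
  have h := Hn 0%N hd; have q0 : 0 < m * nx ^+ 2 by rewrite mulr_gt0 // exprn_gt0.
  have : 0 < cabs (Xn e x 0) ^+ 2 by have := normr_ge0 (vnat eps 0); lra.
  by rewrite lt0r => /andP[]; rewrite expf_eq0 /= lt0r => -> _; rewrite cabs_ge0.
set u := (_ / _).
have hu : cabs u = 1.
  rewrite /u cabsM cabsJ cabsV cabsR ger0_norm ?cabs_ge0 // mulfV //.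
  by rewrite gt_eqF.
have claim : forall n, (n < d)%N -> cabs (ys b n - u * Xn e x n) <=
    ((2 + Num.sqrt 2) / m * (\sum_(i < n) C ^+ i) + C ^+ n / (2 * Num.sqrt m)) * (ne / nx).
  elim=> [|n IH] hn.
    rewrite /= big_ord0 mulr0 add0r expr0 /b (measB _ _ _ hn).
    exact: base m0 nxpos (sup_ge eps 0) (Hn 0%N hn).
  have -> : ys b n.+1 = ((Wn b n)^*)%C * ys b n / ((vnat b n)%:C)%C by [].
  rewrite {2}/b (measB _ _ _ (ltnW hn)) -/b.
  have st :=  (step (ys b n) m0 nxpos ne0 (sup_ge eps n) hu (Xn_le e x n) (Xn_le e x n.+1)
                   (Hn n (ltnW hn)) (Wbound e x eps hn)).
  apply: le_trans st _.
  have C0 : 0 <= C.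
    have s0 : 0 <= Num.sqrt 2 :> R by apply: sqrtr_ge0.
    rewrite /C; apply: divr_ge0; nra.
  apply: le_trans (lerD (ler_wpM2l C0 (IH (ltnW hn))) (lexx _)) _.
  rewrite sum_geomS exprS; rewrite le_eqVlt; apply/orP; left; apply/eqP; ring.
exact: claim (ltn_ord k).
Qed.
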